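(* Let $\Bbbk$ be a field with $\mathrm{char}(\Bbbk)\ne2$, $n\ge2$, $\mathbb{H}_{2^n}$ the Nichols Hopf algebra and $A$ a unital associative $\Bbbk$-algebra. Let $\cdot:\mathbb{H}_{2^n}\otimes A\to A$ be a partial action with $g\cdot1_A=0$ and $x_i\cdot1_A\in Z(A)$ for all $i\in\{1,\dots,n-1\}$. Then for all $a\in A$ and $i\in\{1,\dots,n-1\}$, $$gx_i\cdot a=x_i\cdot a=(x_i\cdot1_A)a,$$ and $gx_{i_1}x_{i_2}\cdots x_{i_s}\cdot a=x_{i_1}x_{i_2}\cdots x_{i_s}\cdot a=0$ for all $s\ge2$ and $i_1,\dots,i_s\in\{1,\dots,n-1\}$.
   Context: $\mathbb{H}_{2^n}$ is the Hopf algebra generated by $g,x_1,\dots,x_{n-1}$ with relations $g^2=1$, $x_i^2=0$, $x_ig=-gx_i$, $x_ix_j=-x_jx_i$, $g$ group-like, $\Delta(x_i)=x_i\otimes1+g\otimes x_i$, $\varepsilon(x_i)=0$. $Z(A)$ is the center of $A$. A partial action of a bialgebra $H$ on $A$ is a linear map $\cdot:H\otimes A\to A$ with $1_H\cdot a=a$, $h\cdot(ab)=(h_1\cdot a)(h_2\cdot b)$, $h\cdot(k\cdot a)=(h_1\cdot1_A)(h_2k\cdot a)$. *)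

(* Defs.v *)
From HB Require Import structures.
From mathcomp Require Import all_boot all_order all_algebra.
Set Implicit Arguments. Unset Strict Implicit. Unset Printing Implicit Defensive.
Import GRing.Theory.
Local Open Scope ring_scope.

(* The Nichols Hopf algebra H_{2^n}, with m = n - 1 skew-primitive generators.
   Generator x_{i+1} of the paper is indexed here by i : 'I_m.
   Basis: g^e x_{s_1} ... x_{s_k}, with e : bool and S = {s_1 < ... < s_k}. *)
Definition HB (m : nat) : finType := (bool * {set 'I_m})%type.

Section Nichols.
Variables (K : fieldType) (m : nat).

(* Product of two basis monomials, computed from the defining relations
   g^2 = 1, x_i^2 = 0, x_i g = - g x_i, x_i x_j = - x_j x_i:
   (g^e x_S)(g^f x_T) = (-1)^(f|S| + #inversions) g^(e+f) x_(S u T) if S, T disjoint,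
   and 0 otherwise. *)
Definition mulB (b c : HB m) : K * HB m :=
  let: (e, Sb) := b in let: (f, Tb) := c in
  let sgn : K := (-1) ^+ (f * #|Sb| +
        #|[set p : 'I_m * 'I_m | (p.1 \in Sb) && (p.2 \in Tb) && (p.2 < p.1)%N]|)%N in
  (if [disjoint Sb & Tb] then sgn else 0, (e (+) f, Sb :|: Tb)).

Definition coefAt (r : K * HB m) (d : HB m) : K := if r.2 == d then r.1 else 0.

Definition Hel := {ffun HB m -> K}.
Definition basisv (b : HB m) : Hel := [ffun c => (c == b)%:R].
Definition hmul (u v : Hel) : Hel :=
  [ffun d => \sum_(b : HB m) \sum_(c : HB m) u b * v c * coefAt (mulB b c) d].
Definition hone : Hel := basisv (false, set0).
Definition gH : Hel := basisv (true, set0).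
Definition xH (i : 'I_m) : Hel := basisv (false, [set i]).
Definition xprod (l : seq 'I_m) : Hel := foldr hmul hone [seq xH i | i <- l].

Definition Tel := {ffun (HB m * HB m) -> K}.
Definition tbasis (p : HB m * HB m) : Tel := [ffun q => (q == p)%:R].
Definition tmul (U V : Tel) : Tel :=
  [ffun d => \sum_(p : HB m * HB m) \sum_(q : HB m * HB m)
     U p * V q * coefAt (mulB p.1 q.1) d.1 * coefAt (mulB p.2 q.2) d.2].
Definition tadd (U V : Tel) : Tel := [ffun d => U d + V d].
Definition tone : Tel := tbasis ((false, set0), (false, set0)).
Definition DeltaG : Tel := tbasis ((true, set0), (true, set0)).
Definition DeltaX (i : 'I_m) : Tel :=
  tadd (tbasis ((false, [set i]), (false, set0))) (tbasis ((true, set0), (false, [set i]))).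
(* Delta is the algebra map extending the above; on the basis monomial
   g^e x_{s_1} ... x_{s_k} (s_1 < ... < s_k) it is Delta(g)^e Delta(x_{s_1}) ... Delta(x_{s_k}). *)
Definition Delta (b : HB m) : Tel :=
  tmul (if b.1 then DeltaG else tone) (foldr tmul tone [seq DeltaX i | i <- enum b.2]).

Variable (A : algType K).

Definition actH (act : HB m -> A -> A) (h : Hel) (a : A) : A :=
  \sum_(b : HB m) h b *: act b a.

(* Partial action of H_{2^n} on A (axioms checked on basis elements, which suffices
   by linearity in h and k):
   1 . a = a ;  h . (a a') = (h_1 . a)(h_2 . a') ;  h . (k . a) = (h_1 . 1)(h_2 k . a). *)
Definition is_partial_action (act : HB m -> A -> A) : Prop :=
  [/\ (forall b (k : K) (a a' : A), act b (k *: a + a') = k *: act b a + act b a'),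
      (forall a, act (false, set0) a = a),
      (forall b (a a' : A), act b (a * a') =
         \sum_(p : HB m * HB m) Delta b p *: (act p.1 a * act p.2 a')) &
      (forall b c (a : A), act b (act c a) =
         \sum_(p : HB m * HB m)
            Delta b p *: (act p.1 1 * actH act (hmul (basisv p.2) (basisv c)) a))].

End Nichols.

(* Main.v *)
Require Import Defs.
From HB Require Import structures.
From mathcomp Require Import all_boot all_order all_algebra.
From mathcomp Require Import ring.
Set Implicit Arguments. Unset Strict Implicit. Unset Printing Implicit Defensive.
Import GRing.Theory.
Local Open Scope ring_scope.

Lemma mulB_0l (K : fieldType) m (e f : bool) (T : {set 'I_m}) :
  mulB K (e, set0) (f, T) = (1, (e (+) f, T)).
Proof.
rewrite /mulB set0U.
have -> : [set p : 'I_m * 'I_m | (p.1 \in set0) && (p.2 \in T) && (p.2 < p.1)%N] = set0.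
  by apply/setP => p; rewrite !inE.
by rewrite !cards0 muln0 expr0 -setI_eq0 set0I eqxx.
Qed.

Lemma mulB_r0 (K : fieldType) m (e : bool) (S : {set 'I_m}) :
  mulB K (e, S) (false, set0) = (1, (e, S)).
Proof.
rewrite /mulB setU0 addbF.
have -> : [set p : 'I_m * 'I_m | (p.1 \in S) && (p.2 \in set0) && (p.2 < p.1)%N] = set0.
  by apply/setP => p; rewrite !inE andbF.
by rewrite !cards0 mul0n expr0 -setI_eq0 setI0 eqxx.
Qed.

Lemma mulB_nz (K : fieldType) m (e f : bool) (S T : {set 'I_m}) :
  [disjoint S & T] -> (mulB K (e, S) (f, T)).1 != 0.
Proof.
move=> d; rewrite /mulB d /= expf_neq0 // oppr_eq0 oner_eq0 //.
Qed.

Lemma mulB_2 (K : fieldType) m (e f : bool) (S T : {set 'I_m}) :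
  (mulB K (e, S) (f, T)).2 = (e (+) f, S :|: T).
Proof. by []. Qed.

Lemma mulB_1_disj (K : fieldType) m (e f : bool) (S T : {set 'I_m}) :
  (mulB K (e, S) (f, T)).1 != 0 -> [disjoint S & T].
Proof. by rewrite /mulB; case: ifP => //=; rewrite eqxx. Qed.

Lemma mulB_xg (K : fieldType) m (i : 'I_m) :
  (mulB K (true, [set i]) (true, set0)).1 = -1.
Proof.
rewrite /mulB /=.
have -> : [set p : 'I_m * 'I_m | (p.1 \in [set i]) && (p.2 \in set0) && (p.2 < p.1)%N] = set0.
  by apply/setP => p; rewrite !inE andbF.
by rewrite cards0 cards1 -setI_eq0 setI0 eqxx expr1.
Qed.

Opaque mulB.

Definition cB (K : fieldType) m (r : K * HB m) : Hel K m := [ffun d => coefAt r d].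

Lemma basisv_cB (K : fieldType) m (b : HB m) : basisv K b = cB (1, b).
Proof. by apply/ffunP => d; rewrite !ffunE /coefAt /= eq_sym; case: eqP. Qed.

Lemma sum_coef (K : fieldType) m (V : zmodType) (r : K * HB m) (F : HB m -> V) :
  \sum_(b : HB m) (if r.2 == b then F b else 0) = F r.2.
Proof.
rewrite (bigD1 r.2) //= eqxx big1 ?addr0 // => b /negbTE nb.
by rewrite eq_sym nb.
Qed.

Lemma hmul_cB (K : fieldType) m (r s : K * HB m) :
  hmul (cB r) (cB s) = cB (r.1 * s.1 * (mulB K r.2 s.2).1, (mulB K r.2 s.2).2).
Proof.
apply/ffunP => d; rewrite !ffunE.
rewrite (eq_bigr (fun b => if r.2 == b then
   \sum_(c : HB m) r.1 * cB s c * coefAt (mulB K b c) d else 0)); last first.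
  move=> b _; rewrite /cB ffunE /coefAt; case: (r.2 =P b) => [<-|_]; first by apply: eq_bigr => c _; rewrite ffunE.
  by rewrite big1 // => c _; rewrite !mul0r.
rewrite sum_coef.
rewrite (eq_bigr (fun c => if s.2 == c then r.1 * s.1 * coefAt (mulB K r.2 c) d else 0)); last first.
  by move=> c _; rewrite ffunE /coefAt; case: eqP => // _; rewrite mulr0 mul0r.
rewrite sum_coef /coefAt /=; case: eqP => _; by rewrite ?mulr0.
Qed.

Lemma sum_if (T : finType) (V : zmodType) (x : T) (F : T -> V) :
  \sum_(y : T) (if x == y then F y else 0) = F x.
Proof.
rewrite (bigD1 x) //= eqxx big1 ?addr0 // => b /negbTE nb.
by rewrite eq_sym nb.
Qed.

Definition tcB (K : fieldType) m (r : K * (HB m * HB m)) : Tel K m :=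
  [ffun d => if r.2 == d then r.1 else 0].

Lemma tbasis_tcB (K : fieldType) m (p : HB m * HB m) : tbasis K p = tcB (1, p).
Proof. by apply/ffunP => d; rewrite !ffunE /= eq_sym; case: eqP. Qed.

Lemma tmul_tcB (K : fieldType) m (k l : K) (p q : HB m * HB m) :
  tmul (tcB (k, p)) (tcB (l, q)) =
  tcB (k * l * (mulB K p.1 q.1).1 * (mulB K p.2 q.2).1,
       ((mulB K p.1 q.1).2, (mulB K p.2 q.2).2)).
Proof.
apply/ffunP => d; rewrite !ffunE.
rewrite (eq_bigr (fun p' => if p == p' then
   \sum_(q' : HB m * HB m) k * tcB (l, q) q' * coefAt (mulB K p'.1 q'.1) d.1
      * coefAt (mulB K p'.2 q'.2) d.2 else 0)); last first.
  move=> p' _; rewrite ffunE /=; case: (p =P p') => [<-|_] //.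
  by rewrite big1 // => c _; rewrite !mul0r.
rewrite sum_if.
rewrite (bigD1 q) //= big1 ?addr0; last first.
  by move=> b /negbTE nb; rewrite ffunE /= eq_sym nb mulr0 !mul0r.
rewrite ffunE /= eqxx /coefAt.
case: d => d1 d2 /=; rewrite xpair_eqE.
case: eqP => _; case: eqP => _ /=; by rewrite ?mulr0 ?mul0r ?mulrA.
Qed.

Lemma tmul_addl (K : fieldType) m (U V W : Tel K m) :
  tmul (tadd U V) W = tadd (tmul U W) (tmul V W).
Proof.
apply/ffunP => d; rewrite !ffunE -big_split; apply: eq_bigr => p _.
rewrite -big_split; apply: eq_bigr => q _; rewrite ffunE; by rewrite !mulrDl.
Qed.

Lemma tmul_addr (K : fieldType) m (U V W : Tel K m) :
  tmul U (tadd V W) = tadd (tmul U V) (tmul U W).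
Proof.
apply/ffunP => d; rewrite !ffunE -big_split; apply: eq_bigr => p _.
rewrite -big_split; apply: eq_bigr => q _; rewrite ffunE; by rewrite mulrDr !mulrDl.
Qed.

Lemma sum_tcB (K : fieldType) m (V : lmodType K) (r : K * (HB m * HB m))
   (F : HB m * HB m -> V) :
  \sum_p tcB r p *: F p = r.1 *: F r.2.
Proof.
rewrite (bigD1 r.2) //= ffunE eqxx big1 ?addr0 // => b /negbTE nb.
by rewrite ffunE eq_sym nb scale0r.
Qed.

Lemma sum_tadd (K : fieldType) m (V : lmodType K) (U W : Tel K m)
   (F : HB m * HB m -> V) :
  \sum_p tadd U W p *: F p = \sum_p U p *: F p + \sum_p W p *: F p.
Proof. by rewrite -big_split; apply: eq_bigr => p _; rewrite ffunE scalerDl. Qed.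

Lemma actH_cB (K : fieldType) m (A : algType K) (act : HB m -> A -> A) r a :
  actH act (cB r) a = r.1 *: act r.2 a.
Proof.
rewrite /actH (eq_bigr (fun b => if r.2 == b then r.1 *: act b a else 0)).
  by rewrite sum_coef.
by move=> b _; rewrite ffunE /coefAt; case: eqP => // _; rewrite scale0r.
Qed.

Lemma Delta_g (K : fieldType) m :
  Delta K (true, set0 : {set 'I_m}) = tcB (1, ((true, set0), (true, set0))).
Proof.
rewrite /Delta /= enum_set0 /= /tone /DeltaG !tbasis_tcB tmul_tcB !mulB_r0.
by rewrite !mulr1.
Qed.

Lemma Delta_gx (K : fieldType) m (i : 'I_m) :
  Delta K (true, [set i]) =
  tadd (tcB (1, ((true, [set i]), (true, set0))))
       (tcB (1, ((false, set0), (true, [set i])))).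
Proof.
rewrite /Delta /= enum_set1 /= /DeltaX /DeltaG /tone !tbasis_tcB.
rewrite tmul_addl !tmul_tcB !mulB_r0 tmul_addr !tmul_tcB /= !mulB_0l /=.
by rewrite !mulr1.
Qed.

Lemma act0 (K : fieldType) m (A : algType K) (act : HB m -> A -> A) b :
  is_partial_action act -> act b 0 = 0.
Proof.
case=> H1 _ _ _; have := H1 b 1 0 0; rewrite !scale1r addr0 => h.
by apply: (addrI (act b 0)); rewrite addr0 -h.
Qed.

Lemma act_g (K : fieldType) m (A : algType K) (act : HB m -> A -> A) a :
  is_partial_action act -> act (true, set0) 1 = 0 -> act (true, set0) a = 0.
Proof.
case=> _ _ H3 _ hg; have := H3 (true, set0) a 1.
by rewrite mulr1 Delta_g sum_tcB /= hg mulr0 scaler0.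
Qed.

Lemma act_gx_r (K : fieldType) m (A : algType K) (act : HB m -> A -> A) i b :
  is_partial_action act -> act (true, set0) 1 = 0 ->
  act (true, [set i]) b = b * act (true, [set i]) 1.
Proof.
case=> _ H2 H3 _ hg; have := H3 (true, [set i]) b 1.
by rewrite mulr1 Delta_gx sum_tadd !sum_tcB /= hg H2 mulr0 !scale1r add0r.
Qed.

Lemma act_step (K : fieldType) m (A : algType K) (act : HB m -> A -> A) i e T a :
  is_partial_action act ->
  act (true, [set i]) (act (e, T) a) =
  act (true, [set i]) 1 * act (~~ e, T) a +
  (mulB K (true, [set i]) (e, T)).1 *: act (~~ e, [set i] :|: T) a.
Proof.
case=> _ H2 _ H4; rewrite H4 Delta_gx sum_tadd !sum_tcB /= !basisv_cB !hmul_cB /=.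
by rewrite !actH_cB /= mulB_0l mulB_2 /= H2 !mul1r !scale1r.
Qed.

Lemma act_base (K : fieldType) m (A : algType K) (act : HB m -> A -> A) i :
  is_partial_action act -> act (true, set0) 1 = 0 ->
  (forall a, act (false, [set i]) a = act (true, [set i]) 1 * a).
Proof.
move=> H hg a; have := act_step i true set0 a H.
rewrite act_g // act0 // mulB_xg setU0 scaleN1r /=.
case: H => _ H2 _ _; rewrite H2 => /eqP; rewrite eq_sym subr_eq0 => /eqP.
by [].
Qed.

Lemma act_ind (K : fieldType) m (A : algType K) (act : HB m -> A -> A) :
  is_partial_action act -> act (true, set0) 1 = 0 ->
  (forall (i : 'I_m) (a : A), act (false, [set i]) 1 * a = a * act (false, [set i]) 1) ->
  forall k (S : {set 'I_m}), #|S| = k.+1 ->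
   (forall a, act (true, S) a = act (false, S) a) /\
   ((0 < k)%N -> forall e a, act (e, S) a = 0).
Proof.
move=> H hg hc.
have hc' i : act (true, [set i]) 1 = act (false, [set i]) 1.
  by rewrite act_base // mulr1.
have hr i b : act (true, [set i]) b = act (false, [set i]) 1 * b.
  by rewrite act_gx_r // hc' hc.
elim=> [|k IH] S hS.
  split=> //; move/eqP/cards1P: hS => [i ->] a.
  by rewrite act_base // hr hc'.
have [i iS] : exists i, i \in S.
  by apply/set0Pn; rewrite -card_gt0 hS.
have hT : #|S :\ i| = k.+1 by move: hS; rewrite (cardsD1 i) iS add1n => [[]].
have [IH1 _] := IH _ hT.
have E : forall e a, act (e, S) a = 0.
  move=> e a; have := act_step i (~~ e) (S :\ i) a H.
  rewrite negbK setD1K // hr hc'.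
  have -> : act (~~ e, S :\ i) a = act (e, S :\ i) a by case: e => /=; rewrite IH1.
  move/esym/eqP; rewrite -subr_eq0 addrAC subrr add0r scaler_eq0 => /orP [|/eqP //].
  have nz : (mulB K (true, [set i]) (~~ e, S :\ i)).1 != 0.
    by apply: mulB_nz; rewrite disjoints1 !inE eqxx.
  by rewrite (negPf nz).
by split => // a; rewrite !E.
Qed.

Lemma xprod_cB (K : fieldType) m (l : seq 'I_m) :
  exists k S, xprod K l = cB (k, (false, S)) /\ (k != 0 -> #|S| = size l).
Proof.
elim: l => [|i l [k [S [E hk]]]].
  by exists 1, set0; rewrite /xprod /= /hone basisv_cB cards0.
exists (1 * k * (mulB K (false, [set i]) (false, S)).1), ([set i] :|: S).
have -> : xprod K (i :: l) = hmul (xH K i) (xprod K l) by [].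
rewrite E /xH basisv_cB hmul_cB /= mulB_2 /=; split => // nz.
have d : [disjoint [set i] & S].
  by apply: (@mulB_1_disj K m false false); apply: contraNneq nz => ->; rewrite mulr0.
have nk : k != 0 by apply: contraNneq nz => ->; rewrite mulr0 mul0r.
by rewrite cardsU1 -disjoints1 d hk.
Qed.

Theorem proposition4p3 (K : fieldType) (n : nat) (A : algType K)
    (act : HB n.-1 -> A -> A) :
  (2%:R : K) != 0 ->
  (2 <= n)%N ->
  is_partial_action act ->
  act (true, set0) 1 = 0 ->
  (forall (i : 'I_n.-1) (a : A), act (false, [set i]) 1 * a = a * act (false, [set i]) 1) ->
  (forall (i : 'I_n.-1) (a : A),
      actH act (hmul (gH K n.-1) (xH K i)) a = actH act (xH K i) a /\
      actH act (xH K i) a = act (false, [set i]) 1 * a) /\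
  (forall (l : seq 'I_n.-1) (a : A), (2 <= size l)%N ->
      actH act (hmul (gH K n.-1) (xprod K l)) a = actH act (xprod K l) a /\
      actH act (xprod K l) a = 0).
Proof.
move=> _ _ H hg hc; split.
  move=> i a; rewrite /gH /xH !basisv_cB hmul_cB !actH_cB /= mulB_0l /= !scale1r mul1r.
  have [E _] := act_ind H hg hc (cards1 i).
  split; first by rewrite mulr1 scale1r E.
  by rewrite !(act_base i H hg) mulr1.
move=> l a hl; have [k [S [E hk]]] := xprod_cB K l.
rewrite E /gH basisv_cB hmul_cB !actH_cB /= mulB_0l /= ?mul1r ?mulr1.
have [->|nz] := eqVneq k 0; first by rewrite !scale0r.
have := hk nz; case Sc : #|S| => [|c] hS; first by move: hl hS => /[swap] <-.
have [E1 E2] := act_ind H hg hc Sc.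
have c0 : (0 < c)%N by move: hl; rewrite -hS.
by rewrite !E2 // scaler0.
Qed.
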